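(* Let $\alpha,\beta\in\mathbb{R}^n_{>}$. Then $\alpha$-GSP has an efficient ex-post equilibrium on type space $\Theta^\beta$ if and only if $n\le 2$ or $k\le 1$; this holds even if $\alpha=\beta$.
   Context: Sponsored search setting: agents $N=\{1,\dots,n\}$, slots $1,\dots,k$ with $k\le n$; an outcome assigns agents to distinct positions, position $j\le k$ meaning slot $j$, others getting nothing (value 0); utilities quasilinear. $\mathbb{R}^n_{>}$: vectors $\alpha$ with $1=\alpha_1>\dots>\alpha_k>0$ and $\alpha_j=0$ for $j>k$. $\Theta^\beta$: type profiles in which each agent $i$ has a value $v_i(\theta_i)\ge0$ (all nonnegative values possible) and values slot $j$ at $\beta_j v_i(\theta_i)$. $\alpha$-GSP: each agent submits $b_i\ge0$ (bid $\alpha_j b_i$ on slot $j$ in GSP); agents are ranked by $b_i$ (ties arbitrary), the rank-$j$ agent ($j\le k$) gets slot $j$ and pays $\alpha_j$ times the $(j+1)$-st highest submitted value ($0$ if none). Incomplete information: a strategy of agent $i$ is a function $s_i$ from its types to submissions $b_i\ge0$. A strategy profile $s$ is an ex-post equilibrium on $\Theta^\beta$ if for every $\theta\in\Theta^\beta$ and every agent $i$, no other submission gives $i$ strictly higher utility against $s_{-i}(\theta_{-i})$; it is efficient if for every $\theta\in\Theta^\beta$ the resulting assignment maximizes total true value. *)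

(* Defs.v *)
From HB Require Import structures.
From mathcomp Require Import all_boot all_order all_algebra all_fingroup.
From mathcomp Require Import reals.
Set Implicit Arguments. Unset Strict Implicit. Unset Printing Implicit Defensive.
Import Order.TTheory GRing.Theory Num.Theory.
Local Open Scope ring_scope.

(* alpha in R^n_> with k slots; 0-based positions: alpha 0 = 1 > alpha 1 > ...
   > alpha (k-1) > 0 and alpha j = 0 for j >= k (positions >= n are unused). *)
Definition Rn_gt (R : realType) (n k : nat) (a : nat -> R) : Prop :=
  [/\ (k <= n)%N, a 0%N = 1,
      (forall j : nat, (j.+1 < k)%N -> a j.+1 < a j),
      (forall j : nat, (j < k)%N -> 0 < a j) &
      (forall j : nat, (k <= j)%N -> a j = 0)].

(* A tie-breaking rule: maps a bid vector to a ranking (agent i gets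
   0-based position tb b i) that sorts the bids non-increasingly. *)
Definition valid_tiebreak (R : realType) (n : nat)
    (tb : ('I_n -> R) -> {perm 'I_n}) : Prop :=
  forall (b : 'I_n -> R) (i j : 'I_n), (tb b i < tb b j)%N -> b j <= b i.

(* Bid of the agent ranked just below agent i (0 if none), i.e. the
   ((pos i)+2)-nd highest submitted value in 1-based terms. *)
Definition next_bid (R : realType) (n : nat) (s : {perm 'I_n}) (b : 'I_n -> R)
    (i : 'I_n) : R :=
  oapp (fun p : 'I_n => b ((s^-1)%g p)) 0 (insub (s i).+1 : option 'I_n).

Definition gsp_util (R : realType) (n : nat) (alpha beta : nat -> R)
    (tb : ('I_n -> R) -> {perm 'I_n}) (b : 'I_n -> R) (i : 'I_n) (v : R) : R :=
  beta (tb b i) * v - alpha (tb b i) * next_bid (tb b) b i.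

(* Strategies: types in Theta^beta are identified with values v >= 0. *)
Definition strategy_ok (R : realType) (n : nat) (s : 'I_n -> R -> R) : Prop :=
  forall (i : 'I_n) (v : R), 0 <= v -> 0 <= s i v.

Definition nonneg_profile (R : realType) (n : nat) (v : 'I_n -> R) : Prop :=
  forall i, 0 <= v i.

Definition bids_of (R : realType) (n : nat) (s : 'I_n -> R -> R) (v : 'I_n -> R)
  : 'I_n -> R := fun j => s j (v j).

Definition deviate (R : realType) (n : nat) (b : 'I_n -> R) (i : 'I_n) (x : R)
  : 'I_n -> R := fun j => if j == i then x else b j.

Definition expost_eq (R : realType) (n : nat) (alpha beta : nat -> R)
    (tb : ('I_n -> R) -> {perm 'I_n}) (s : 'I_n -> R -> R) : Prop :=
  forall v : 'I_n -> R, nonneg_profile v ->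
  forall (i : 'I_n) (x : R), 0 <= x ->
    gsp_util alpha beta tb (deviate (bids_of s v) i x) i (v i)
      <= gsp_util alpha beta tb (bids_of s v) i (v i).

Definition total_value (R : realType) (n : nat) (beta : nat -> R)
    (s : {perm 'I_n}) (v : 'I_n -> R) : R :=
  \sum_(i < n) beta (s i) * v i.

Definition efficient (R : realType) (n : nat) (beta : nat -> R)
    (tb : ('I_n -> R) -> {perm 'I_n}) (s : 'I_n -> R -> R) : Prop :=
  forall v : 'I_n -> R, nonneg_profile v ->
  forall t : {perm 'I_n}, total_value beta t v <= total_value beta (tb (bids_of s v)) v.

(* Main.v *)
Require Import Defs.
From HB Require Import structures.
From mathcomp Require Import all_boot all_order all_algebra all_fingroup.
From mathcomp Require Import reals ring lra zify.
Import Order.TTheory GRing.Theory Num.Theory.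
Local Open Scope ring_scope.
Set Implicit Arguments. Unset Strict Implicit.


Lemma nb_some (R : realType) n (σ : {perm 'I_n}) (b : 'I_n -> R) i (h : ((σ i).+1 < n)%N) :
  next_bid σ b i = b (σ^-1 (Ordinal h))%g.
Proof. by rewrite /next_bid insubT. Qed.

Lemma nb_none (R : realType) n (σ : {perm 'I_n}) (b : 'I_n -> R) i : ~~ ((σ i).+1 < n)%N ->
  next_bid σ b i = 0.
Proof. by move=> h; rewrite /next_bid insubF /= ?(negbTE h). Qed.

Lemma vt_lt (R : realType) n (tb : ('I_n -> R) -> {perm 'I_n}) :
  valid_tiebreak tb -> forall b i j, b j < b i -> (tb b i < tb b j)%N.
Proof.
move=> H b i j lt; rewrite ltnNge leq_eqVlt; apply/negP=> /orP[/eqP e | l].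
  have e' : tb b j = tb b i by apply/val_inj.
  by move: lt; rewrite (perm_inj e') ltxx.
by move: (H b j i l); rewrite leNgt lt.
Qed.

Lemma vt_top (R : realType) n (tb : ('I_n -> R) -> {perm 'I_n}) :
  valid_tiebreak tb -> forall b i, (forall j, j != i -> b j < b i) -> tb b i = 0%N :> nat.
Proof.
move=> H b i hi; apply/eqP; apply/negPn/negP=> ne.
have n0 : (0 < n)%N by apply: leq_ltn_trans (ltn_ord i).
set u := ((tb b)^-1 (Ordinal n0))%g.
have hu : tb b u = Ordinal n0 by rewrite permKV.
have ui : u != i by apply/eqP=> e; move: ne; rewrite -e hu.
have := H b u i; rewrite hu /= lt0n => /(_ ne).
by rewrite leNgt hi.
Qed.

Lemma beta_lt (R : realType) n k (beta : nat -> R) : Rn_gt n k beta ->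
  forall i j, (i < j)%N -> (i < k)%N -> beta j < beta i.
Proof.
case=> _ _ dec pos zero.
have H1 : forall d i, (i + d.+1 < k)%N -> beta (i + d.+1)%N < beta i.
  elim=> [|d IH] i h; first by rewrite addn1; apply: dec; rewrite -addn1.
  rewrite addnS; apply: (lt_trans (dec (i + d.+1)%N _) (IH i _)); [by rewrite -addnS | lia].
move=> i j ij ik; case: (ltnP j k) => jk.
  have := H1 (j - i).-1 i; have -> : (i + (j - i).-1.+1 = j)%N by lia.
  by apply; lia.
by rewrite zero // pos.
Qed.

Lemma total_swap (R : realType) n (beta : nat -> R) (σ : {perm 'I_n}) (v : 'I_n -> R) a b :
  a != b -> total_value beta (tperm a b * σ)%g v =
   total_value beta σ v + (beta (σ b) - beta (σ a)) * (v a - v b).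
Proof.
move=> ab; rewrite /total_value (bigD1 a) // (bigD1 b) /= ?(eq_sym b) //.
rewrite [X in _ = X + _](bigD1 a) // (bigD1 b) /= ?(eq_sym b) //.
rewrite !permM tpermL tpermR.
rewrite (eq_bigr (fun i => beta (σ i) * v i)); last first.
  by move=> i /andP[ia ib]; rewrite permM tpermD // eq_sym.
ring.
Qed.



Lemma pos_neq n (σ : {perm 'I_n}) i j : i != j -> (σ i != σ j :> nat).
Proof.
move=> ij; apply/eqP=> e; have e' : σ i = σ j by apply/val_inj.
by move: ij; rewrite (perm_inj e') eqxx.
Qed.

Lemma eff_TM (R : realType) n k (beta : nat -> R) tb (s : 'I_n -> R -> R) :
  Rn_gt n k beta -> (1 < k)%N -> efficient beta tb s ->
  forall v, nonneg_profile v -> forall T M, T != M -> v M < v T ->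
  (forall j, j != T -> j != M -> v j < v M) ->
  (tb (bids_of s v) T = 0%N :> nat) /\ (tb (bids_of s v) M = 1%N :> nat).
Proof.
move=> Hb hk Hef v hv T M TM hT hM.
set σ := tb (bids_of s v).
have n0 : (0 < n)%N by apply: leq_ltn_trans (ltn_ord T).
have hk' : (k <= n)%N by case: Hb.
have n1 : (1 < n)%N by apply: leq_trans hk hk'.
have E := Hef v hv.
have hσT : σ T = 0%N :> nat.
  apply/eqP; apply/negPn/negP => ne.
  set u := (σ^-1 (Ordinal n0))%g.
  have hu : σ u = Ordinal n0 by rewrite permKV.
  have uT : T != u by apply/eqP=> e; move: ne; rewrite e hu.
  have := E (tperm T u * σ)%g; rewrite total_swap // hu /=.
  have b1 : beta (σ T) < beta 0%N.
    by apply: (beta_lt Hb); [rewrite lt0n | lia].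
  have v1 : v u < v T.
    case: (eqVneq u M) => [->|uM] //.
    by apply: lt_trans (hM u _ uM) hT; rewrite eq_sym.
  have p : 0 < (beta 0%N - beta (σ T)) * (v T - v u) by apply: mulr_gt0; rewrite subr_gt0.
  lra.
split=> //.
have M0 : σ M != 0%N :> nat by rewrite -hσT; apply: pos_neq; rewrite eq_sym.
apply/eqP; apply/negPn/negP => ne.
set u := (σ^-1 (Ordinal n1))%g.
have hu : σ u = Ordinal n1 by rewrite permKV.
have uM : M != u by apply/eqP=> e; move: ne; rewrite e hu.
have uT : u != T by apply/eqP=> e; move: hσT; rewrite -e hu.
have := E (tperm M u * σ)%g; rewrite total_swap // hu /=.
have b1 : beta (σ M) < beta 1%N by apply: (beta_lt Hb); lia.
have v1 : v u < v M by apply: hM => //; rewrite eq_sym.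
have p : 0 < (beta 1%N - beta (σ M)) * (v M - v u) by apply: mulr_gt0; rewrite subr_gt0.
lra.
Qed.



Lemma dev_same (R : realType) n (b : 'I_n -> R) i x j : j != i -> deviate b i x j = b j.
Proof. by rewrite /deviate => /negbTE ->. Qed.

Lemma dev_at (R : realType) n (b : 'I_n -> R) i x : deviate b i x i = x.
Proof. by rewrite /deviate eqxx. Qed.

Lemma m_up (R : realType) n k (alpha beta : nat -> R) tb (s : 'I_n -> R -> R) :
  Rn_gt n k alpha -> Rn_gt n k beta -> (1 < k)%N -> valid_tiebreak tb ->
  strategy_ok s -> expost_eq alpha beta tb s -> efficient beta tb s ->
  forall v, nonneg_profile v -> forall T M L, T != M -> L != T -> L != M ->
  v M < v T -> (forall j, j != T -> j != M -> v j < v M) ->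
  (1 - beta 1%N) * v M + alpha 1%N * s L (v L) <= s T (v T).
Proof.
move=> Ha Hb hk Htb Hs Heq Hef v hv T M L TM LT LM hT hM.
have [hσT hσM] := eff_TM Hb hk Hef hv TM hT hM.
have Heqv := Heq v hv M.
have a1 : 0 < alpha 1%N by case: Ha => _ _ _ p _; apply: p.
have a0 : alpha 0%N = 1 by case: Ha.
have b0 : beta 0%N = 1 by case: Hb.
move: hσT hσM Heqv.
rewrite /gsp_util.
set b := bids_of s v; set σ := tb b => hσT hσM Heqv.
have bnn : forall j, 0 <= b j by move=> j; apply: Hs; apply: hv.
have bT : forall j, b j <= b T.
  move=> j; case: (eqVneq j T) => [->//|jT].
  by apply: Htb; rewrite hσT lt0n -hσT; apply: pos_neq.
have hL2 : (2 <= σ L)%N.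
  have := pos_neq σ LT; have := pos_neq σ LM; rewrite hσT hσM; by case: (nat_of_ord (σ L)) => [|[|m]].
have h2 : ((σ M).+1 < n)%N by rewrite hσM; apply: leq_trans (ltn_ord (σ L)).
set w := (σ^-1 (Ordinal h2))%g.
have hw : σ w = Ordinal h2 by rewrite permKV.
have bLw : b L <= b w.
  case: (eqVneq L w) => [->//|Lw].
  apply: Htb; rewrite hw /= hσM; have := pos_neq σ Lw; rewrite hw /= hσM => ne.
  by rewrite ltn_neqAle hL2 andbT eq_sym.
have := Heqv (b T + 1); rewrite -/b.
set b' := deviate b M (b T + 1); set σ' := tb b'.
have hσ'M : σ' M = 0%N :> nat.
  apply: (vt_top Htb) => j jM; rewrite /b' dev_at dev_same //.
  by apply: le_lt_trans (bT j) _; rewrite ltrDl.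
have h1 : ((σ' M).+1 < n)%N by rewrite hσ'M; apply: leq_ltn_trans _ (ltn_ord (σ L)); lia.
have bT1 : 0 <= b T + 1 by apply: addr_ge0.
move=> /(_ bT1).
rewrite (nb_some _ h1) (nb_some _ h2) -/w.
set w' := (σ'^-1 (Ordinal h1))%g.
rewrite hσ'M hσM a0 b0.
have hw' : σ' w' = Ordinal h1 by rewrite permKV.
have w'M : w' != M by apply/eqP=> e; move: hw'; rewrite e => /(congr1 val); rewrite /= hσ'M.
rewrite /b' dev_same // -/b'.
have := bT w'.
have : alpha 1%N * b L <= alpha 1%N * b w by apply: ler_wpM2l => //; apply: ltW.
rewrite /b /bids_of.
move=> *; lra.
Qed.



Lemma t_down (R : realType) n k (alpha beta : nat -> R) tb (s : 'I_n -> R -> R) :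
  Rn_gt n k alpha -> Rn_gt n k beta -> (1 < k)%N -> valid_tiebreak tb ->
  strategy_ok s -> expost_eq alpha beta tb s -> efficient beta tb s ->
  forall v, nonneg_profile v -> forall T M, T != M ->
  v M < v T -> (forall j, j != T -> j != M -> v j < v M) ->
  forall K0, 0 <= K0 -> (forall j, j != T -> j != M -> s j (v j) <= K0) ->
  K0 < s M (v M) ->
  s M (v M) <= (1 - beta 1%N) * v T + alpha 1%N * K0.
Proof.
move=> Ha Hb hk Htb Hs Heq Hef v hv T M TM hT hM K0 K0p HK HKM.
have [hσT hσM] := eff_TM Hb hk Hef hv TM hT hM.
have Heqv := Heq v hv T.
have a1 : 0 < alpha 1%N by case: Ha => _ _ _ p _; apply: p.
have a0 : alpha 0%N = 1 by case: Ha.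
have b0 : beta 0%N = 1 by case: Hb.
have hk' : (k <= n)%N by case: Hb.
have n1 : (1 < n)%N by apply: leq_trans hk hk'.
move: hσT hσM Heqv HK HKM.
rewrite /gsp_util.
set b := bids_of s v; set σ := tb b => hσT hσM Heqv HK HKM.
have HK' : forall j, j != T -> j != M -> b j <= K0 by exact: HK.
have HKM' : K0 < b M by exact: HKM.
have h1 : ((σ T).+1 < n)%N by rewrite hσT.
set d := (K0 + b M) / 2.
have dK : K0 < d by rewrite /d; lra.
have dM : d < b M by rewrite /d; lra.
have d0 : 0 <= d by lra.
have := Heqv d d0; rewrite -/b.
set b' := deviate b T d; set σ' := tb b'.
have hσ'M : σ' M = 0%N :> nat.
  have MT : M != T by rewrite eq_sym.
  apply: (vt_top Htb) => j jM; rewrite /b' (dev_same b d MT).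
  case: (eqVneq j T) => [->|jT]; first by rewrite dev_at.
  by rewrite dev_same //; apply: le_lt_trans (HK' _ jT jM) _; lra.
have hσ'T : σ' T = 1%N :> nat.
  set u := (σ'^-1 (Ordinal n1))%g.
  have hu : σ' u = Ordinal n1 by rewrite permKV.
  case: (eqVneq u T) => [<-|uT]; first by rewrite hu.
  have uM : u != M by apply/eqP=> e; move: hσ'M; rewrite -e hu.
  have : (σ' T < σ' u)%N.
    apply: (vt_lt Htb); rewrite /b' dev_at dev_same //.
    by apply: le_lt_trans (HK' _ uT uM) _.
  rewrite hu /= ltnS leqn0 => /eqP e.
  have : σ' T = σ' M by apply/val_inj; rewrite /= e hσ'M.
  by move/perm_inj=> e'; move: TM; rewrite e' eqxx.
rewrite (nb_some _ h1).
have wM : (σ^-1 (Ordinal h1))%g = M.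
  by apply: (perm_inj (s:=σ)); rewrite permKV; apply/val_inj; rewrite /= hσT hσM.
rewrite wM hσT a0 b0.
have nbK : next_bid σ' b' T <= K0.
  case: (ltnP (σ' T).+1 n) => h2.
    rewrite (nb_some _ h2).
    set w := (σ'^-1 (Ordinal h2))%g.
    have hw : σ' w = Ordinal h2 by rewrite permKV.
    have wT : w != T by apply/eqP=> e; move: hw; rewrite e => /(congr1 val) /=; rewrite hσ'T.
    have wM' : w != M by apply/eqP=> e; move: hw; rewrite e => /(congr1 val) /=; rewrite hσ'M hσ'T.
    by rewrite /b' dev_same //; apply: HK'.
  by rewrite nb_none // -ltnNge.
rewrite hσ'T.
have : alpha 1%N * next_bid σ' b' T <= alpha 1%N * K0 by apply: ler_wpM2l => //; apply: ltW.
rewrite /b /bids_of.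
move=> *; lra.
Qed.



Lemma impossible (R : realType) n k (alpha beta : nat -> R) tb (s : 'I_n -> R -> R) :
  Rn_gt n k alpha -> Rn_gt n k beta -> (1 < k)%N -> (2 < n)%N -> valid_tiebreak tb ->
  strategy_ok s -> expost_eq alpha beta tb s -> efficient beta tb s -> False.
Proof.
move=> Ha Hb hk hn Htb Hs Heq Hef.
have n0 : (0 < n)%N by lia.
have n1 : (1 < n)%N by lia.
pose P := Ordinal n0; pose Q := Ordinal n1; pose Rr := Ordinal hn.
have PQ : P != Q by []. have QP : Q != P by [].
have PR : P != Rr by []. have RP : Rr != P by [].
have QR : Q != Rr by []. have RQ : Rr != Q by [].
pose prof (xp xq xr : R) : 'I_n -> R :=
  fun j => if j == P then xp else if j == Q then xq else if j == Rr then xr else 0.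
have profP xp xq xr : prof xp xq xr P = xp by rewrite /prof eqxx.
have profQ xp xq xr : prof xp xq xr Q = xq by rewrite /prof eqxx (negbTE QP).
have profR xp xq xr : prof xp xq xr Rr = xr by rewrite /prof eqxx (negbTE RP) (negbTE RQ).
have profO xp xq xr j : j != P -> j != Q -> j != Rr -> prof xp xq xr j = 0.
  by move=> /negbTE jP /negbTE jQ /negbTE jR; rewrite /prof jP jQ jR.
have profnn xp xq xr : 0 <= xp -> 0 <= xq -> 0 <= xr -> nonneg_profile (prof xp xq xr).
  move=> hp hq hr j; rewrite /prof.
  by case: (j == P) => //; case: (j == Q) => //; case: (j == Rr).
have a1 : 0 < alpha 1%N by case: Ha => _ _ _ p _; apply: p.
have b0 : beta 0%N = 1 by case: Hb.
have bl : beta 1%N < beta 0%N by apply: (beta_lt Hb); lia.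
set a := alpha 1%N in a1 *.
set c := 1 - beta 1%N.
have c0 : 0 < c by rewrite /c; lra.
pose v0 := prof 0 0 1.
pose K0 := \sum_j s j (v0 j).
have K0p : 0 <= K0 by apply: sumr_ge0 => j _; apply: Hs; apply: profnn; lra.
pose Z := 2 + (2 * c + a * K0) / (a * c).
have ac0 : 0 < a * c by apply: mulr_gt0.
have Z2 : 2 <= Z.
  rewrite /Z lerDl; apply: divr_ge0; last exact: ltW.
  by apply: addr_ge0; [lra | apply: mulr_ge0 => //; apply: ltW].
have F3 : a * (c * (Z - 1)) = a * c + 2 * c + a * K0.
  by rewrite /Z; field; rewrite !gt_eqF.
have F1 : c * (Z - 1) <= s Rr Z.
  have := @m_up _ _ _ _ _ _ s Ha Hb hk Htb Hs Heq Hef (prof (Z - 1) (1/2) Z)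
    (profnn (Z - 1) (1/2) Z ltac:(lra) ltac:(lra) ltac:(lra)) Rr P Q RP QR QP.
  rewrite !profP !profQ !profR.
  have hq : 0 <= s Q (1/2) by apply: Hs; lra.
  have : 0 <= a * s Q (1/2) by apply: mulr_ge0 => //; apply: ltW.
  move=> h1 h2; suff : c * (Z - 1) + a * s Q (1/2) <= s Rr Z by lra.
  apply: h2; first lra.
  move=> j jR jP; case: (eqVneq j Q) => [->|jQ]; first by rewrite profQ; lra.
  by rewrite profO //; lra.
have F2 : a * (c * (Z - 1)) <= a * s Rr Z by apply: ler_wpM2l => //; apply: ltW.
pose y := Z + 2 + K0 / c.
have Kc : 0 <= K0 / c by apply: divr_ge0 => //; apply: ltW.
have yd : y = Z + 2 + K0 / c by [].
have cy : c * (y - 1) = c * (Z + 1) + K0.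
  rewrite /y; field; by rewrite gt_eqF.
have F4 : c * (y - 1) + a * s Rr Z <= s Q y.
  have := @m_up _ _ _ _ _ _ s Ha Hb hk Htb Hs Heq Hef (prof (y - 1) y Z)
    (profnn (y - 1) y Z ltac:(lra) ltac:(lra) ltac:(lra)) Q P Rr QP RQ RP.
  rewrite !profP !profQ !profR.
  move=> h2; apply: h2; first lra.
  move=> j jQ jP; case: (eqVneq j Rr) => [->|jR]; first by rewrite profR; lra.
  by rewrite profO //; lra.
have F5 : s Q y <= c * (y + 1) + a * K0.
  have := @t_down _ _ _ _ _ _ s Ha Hb hk Htb Hs Heq Hef (prof (y + 1) y 1)
    (profnn (y + 1) y 1 ltac:(lra) ltac:(lra) ltac:(lra)) P Q PQ.
  rewrite !profP !profQ.
  move=> h; apply: h => //; first lra.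
  - move=> j jP jQ; case: (eqVneq j Rr) => [->|jR]; first by rewrite profR; lra.
    by rewrite profO //; lra.
  - move=> j jP jQ.
    have -> : prof (y + 1) y 1 j = v0 j.
      rewrite /v0; case: (eqVneq j Rr) => [->|jR]; first by rewrite !profR.
      by rewrite !profO.
    rewrite /K0 (bigD1 j) //= lerDl; apply: sumr_ge0 => i _; apply: Hs.
    by apply: profnn; lra.
  - have hh : 0 < c * (Z + 1) by apply: mulr_gt0; lra.
    have : 0 <= a * s Rr Z by apply: mulr_ge0; [apply: ltW | apply: Hs; lra].
    lra.
have : c * (y + 1) = c * (y - 1) + 2 * c by ring.
lra.
Qed.



Lemma k_gt0 (R : realType) n k (beta : nat -> R) : Rn_gt n k beta -> (0 < k)%N.
Proof.
case=> _ h0 _ _ z; rewrite lt0n; apply/negP => /eqP k0.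
by move: h0; rewrite z ?k0 // => /eqP; rewrite eq_sym oner_eq0.
Qed.

Lemma util_k1 (R : realType) n (alpha beta : nat -> R) tb :
  Rn_gt n 1 alpha -> Rn_gt n 1 beta -> forall (b0 : 'I_n -> R) i vi,
  gsp_util alpha beta tb b0 i vi =
  if (tb b0 i == 0%N :> nat) then vi - next_bid (tb b0) b0 i else 0.
Proof.
move=> [_ a0 _ _ za] [_ b0 _ _ zb] b i vi; rewrite /gsp_util.
case: eqP => [->|ne]; first by rewrite a0 b0 !mul1r.
have h : (1 <= tb b i)%N by rewrite lt0n; apply/eqP.
by rewrite za // zb // !mul0r subr0.
Qed.

Lemma nb_top (R : realType) n (tb : ('I_n -> R) -> {perm 'I_n}) :
  valid_tiebreak tb -> forall b i, tb b i = 0%N :> nat ->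
  (forall j, j != i -> b j <= next_bid (tb b) b i) /\
  (next_bid (tb b) b i = 0 \/ exists2 j, j != i & next_bid (tb b) b i = b j).
Proof.
move=> Htb b i hi; set σ := tb b in hi *.
case: (ltnP (σ i).+1 n) => h.
  rewrite (nb_some _ h); set w := (σ^-1 (Ordinal h))%g.
  have hw : σ w = Ordinal h by rewrite permKV.
  have wi : w != i by apply/eqP=> e; move: hw; rewrite e => /(congr1 val) /=; rewrite hi.
  split; last by right; exists w.
  move=> j ji; case: (eqVneq j w) => [->//|jw].
  apply: Htb; rewrite -/σ hw /= hi.
  have := pos_neq σ jw; have := pos_neq σ ji; rewrite hw /= hi.
  by case: (nat_of_ord (σ j)) => [|[|m]].
rewrite nb_none -?ltnNge //; split; last by left.
move=> j ji; have := pos_neq σ ji; rewrite hi => ne.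
have := ltn_ord (σ j); move: ne h; case: (nat_of_ord (σ j)) => // m _ h1 h2.
lia.
Qed.

Lemma case_k1 (R : realType) n (alpha beta : nat -> R) tb :
  Rn_gt n 1 alpha -> Rn_gt n 1 beta -> valid_tiebreak tb ->
  exists s : 'I_n -> R -> R,
    [/\ strategy_ok s, expost_eq alpha beta tb s & efficient beta tb s].
Proof.
move=> Ha Hb Htb; exists (fun _ v => v); split.
- by move=> i v.
- move=> v hv i x hx; rewrite !(util_k1 tb Ha Hb).
  set b := bids_of _ v; set b' := deviate b i x.
  have bE : forall j, b j = v j by [].
  have b'nn : forall j, 0 <= b' j.
    by move=> j; rewrite /b' /deviate; case: (j == i) => //; apply: hv.
  case: eqP => hi'; case: eqP => hi.
  + have [N1 N2] := nb_top Htb hi; have [N1' N2'] := nb_top Htb hi'.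
    suff : next_bid (tb b) b i <= next_bid (tb b') b' i by lra.
    case: N2 => [->|[j ji ->]].
      by case: N2' => [->//|[j ji ->]].
    by rewrite -(dev_same b x ji); apply: N1'.
  + have [N1' N2'] := nb_top Htb hi'.
    have n0 : (0 < n)%N by apply: leq_ltn_trans (ltn_ord i).
    set u := ((tb b)^-1 (Ordinal n0))%g.
    have hu : tb b u = Ordinal n0 by rewrite permKV.
    have ui : u != i by apply/eqP=> e; apply: hi; rewrite -e hu.
    have : b i <= b u by apply: Htb; rewrite hu lt0n; apply/eqP.
    have := N1' u ui; rewrite /b' dev_same // -/b' bE bE.
    lra.
  + have [N1 N2] := nb_top Htb hi.
    suff : next_bid (tb b) b i <= v i by lra.
    case: N2 => [->//|[j ji ->]].
    by rewrite -bE; apply: Htb; rewrite hi lt0n -hi; apply: pos_neq.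
  + by [].
- move=> v hv t.
  have n0 : (0 < n)%N by case: Hb => h _ _ _ _.
  pose o := Ordinal n0.
  have tot : forall t : {perm 'I_n}, total_value beta t v = v ((t^-1) o)%g.
    move=> t'; rewrite /total_value (bigD1 ((t'^-1) o)%g) //= permKV.
    case: Hb => _ b0 _ _ zb; rewrite b0 mul1r big1 ?addr0 // => i hi.
    rewrite zb ?mul0r // lt0n; apply/eqP=> e.
    move: hi; have -> : i = (t'^-1 o)%g; last by rewrite eqxx.
    by apply: (perm_inj (s:=t')); rewrite permKV; apply/val_inj.
  rewrite !tot; set w := (t^-1 o)%g; set u := ((tb (bids_of _ v))^-1 o)%g.
  case: (eqVneq w u) => [->//|wu].
  have : (tb (bids_of (fun=> id) v) u < tb (bids_of (fun=> id) v) w)%N.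
    rewrite /u permKV /=; rewrite lt0n.
    have := pos_neq (tb (bids_of (fun=> id) v)) wu; rewrite /u permKV //.
  by move/Htb.
Qed.



Definition other (i : 'I_2) : 'I_2 := if i == ord0 then ord_max else ord0.

Lemma I2_uniq (i j : 'I_2) : j != i -> j = other i.
Proof.
rewrite /other.
case: i => [[|[|m]] hi]; case: j => [[|[|m']] hj] //=; try (by move=> _; apply/val_inj).
Qed.

Lemma other_neq (i : 'I_2) : other i != i.
Proof. by case: i => [[|[|m]] hi]. Qed.

Lemma pos2 (σ : {perm 'I_2}) i : (σ i == 0%N :> nat) = ~~ (σ (other i) == 0%N :> nat).
Proof.
have := pos_neq σ (other_neq i); have := ltn_ord (σ i); have := ltn_ord (σ (other i)).
by case: (nat_of_ord (σ i)) => [|[|?]]; case: (nat_of_ord (σ (other i))) => [|[|?]].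
Qed.

Lemma util_22 (R : realType) (alpha beta : nat -> R) tb :
  Rn_gt 2 2 alpha -> Rn_gt 2 2 beta -> forall (b0 : 'I_2 -> R) i vi,
  gsp_util alpha beta tb b0 i vi =
  if (tb b0 i == 0%N :> nat) then vi - b0 (other i) else beta 1%N * vi.
Proof.
move=> [_ a0 _ _ za] [_ b0 _ _ zb] b i vi; rewrite /gsp_util.
case: eqP => [e|ne].
  have h : ((tb b i).+1 < 2)%N by rewrite e.
  rewrite (nb_some _ h); set w := ((tb b)^-1 _)%g.
  have hw : tb b w = Ordinal h by rewrite permKV.
  rewrite e a0 b0 !mul1r; congr (_ - b _).
  apply: I2_uniq; apply/eqP=> e'.
  by move: hw; rewrite e' => /(congr1 val) /=; rewrite e.
have e : tb b i = 1%N :> nat.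
  by move: ne; have := ltn_ord (tb b i); case: (nat_of_ord (tb b i)) => [|[|?]].
by rewrite nb_none ?e // mulr0 subr0.
Qed.

Lemma tot2 (R : realType) (beta : nat -> R) (t : {perm 'I_2}) v :
  total_value beta t v = beta (t ord0) * v ord0 + beta (t ord_max) * v ord_max.
Proof.
rewrite /total_value !big_ord_recl big_ord0 addr0.
by have -> : lift ord0 ord0 = (ord_max : 'I_2) by apply/val_inj.
Qed.

Lemma case_22 (R : realType) (alpha beta : nat -> R) tb :
  Rn_gt 2 2 alpha -> Rn_gt 2 2 beta -> valid_tiebreak tb ->
  exists s : 'I_2 -> R -> R,
    [/\ strategy_ok s, expost_eq alpha beta tb s & efficient beta tb s].
Proof.
move=> Ha Hb Htb.
have b1 : beta 1%N < beta 0%N by apply: (beta_lt Hb).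
have b1p : 0 < beta 1%N by case: Hb => _ _ _ p _; apply: p.
have b0 : beta 0%N = 1 by case: Hb.
set c := 1 - beta 1%N.
have c0 : 0 < c by rewrite /c; lra.
exists (fun _ v => c * v); split.
- by move=> i v hv; apply: mulr_ge0 => //; apply: ltW.
- move=> v hv i x hx; rewrite !(util_22 tb Ha Hb).
  set b := bids_of _ v; set b' := deviate b i x.
  have bE : forall j, b j = c * v j by [].
  rewrite /b' dev_same ?other_neq // -/b' bE.
  set j := other i.
  have sorted : (tb b i == 0%N :> nat) -> c * v j <= c * v i.
    move=> hi; rewrite -!bE; apply: Htb; rewrite (eqP hi) lt0n.
    by have := pos_neq (tb b) (other_neq i); rewrite (eqP hi).
  have sorted' : ~~ (tb b i == 0%N :> nat) -> c * v i <= c * v j.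
    rewrite pos2 negbK => hj; rewrite -!bE; apply: Htb; rewrite (eqP hj) lt0n.
    by have := pos_neq (tb b) (other_neq i); rewrite (eqP hj) eq_sym.
  case: (tb b i == 0%N :> nat) sorted sorted'; case: (tb b' i == 0%N :> nat);
   move=> h1 h2; rewrite /c in h1 h2 *; try (have := h1 erefl); try (have := h2 erefl); lra.
- move=> v hv t; rewrite !tot2.
  set bb := bids_of _ v; set σ := tb bb.
  have cases : forall t : {perm 'I_2},
     (t ord0 = 0%N :> nat /\ t ord_max = 1%N :> nat) \/
     (t ord0 = 1%N :> nat /\ t ord_max = 0%N :> nat).
    move=> t'; have := pos_neq t' (isT : (ord0 : 'I_2) != ord_max).
    have := ltn_ord (t' ord0); have := ltn_ord (t' ord_max).
    by case: (nat_of_ord (t' ord0)) => [|[|?]]; case: (nat_of_ord (t' ord_max)) => [|[|?]]; auto.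
  have s1 : σ ord0 = 0%N :> nat -> c * v ord_max <= c * v ord0.
    by move=> h; apply: (Htb bb ord0 ord_max); rewrite h lt0n; have := pos_neq σ (isT : (ord_max : 'I_2) != ord0); rewrite h.
  have s2 : σ ord_max = 0%N :> nat -> c * v ord0 <= c * v ord_max.
    by move=> h; apply: (Htb bb ord_max ord0); rewrite h lt0n; have := pos_neq σ (isT : (ord0 : 'I_2) != ord_max); rewrite h.
  have b1' : beta 1%N = 1 - c by rewrite /c; ring.
  case: (cases t) => [[-> ->]|[-> ->]]; case: (cases σ) => [[e1 e2]|[e1 e2]];
   rewrite ?e1 ?e2; try (have := s1 e1); try (have := s2 e2); rewrite ?b1' ?b0 => *; lra.
Qed.


Unset Implicit Arguments. Set Strict Implicit.

Theorem theorem6 (R : realType) (n k : nat) (alpha beta : nat -> R)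
    (tb : ('I_n -> R) -> {perm 'I_n}) :
  Rn_gt n k alpha -> Rn_gt n k beta -> valid_tiebreak tb ->
  ((exists s : 'I_n -> R -> R,
       [/\ strategy_ok s, expost_eq alpha beta tb s & efficient beta tb s])
   <-> (n <= 2)%N \/ (k <= 1)%N).
Proof.
move=> Ha Hb Htb; split.
  move=> [s [Hs Heq Hef]].
  case: (leqP n 2) => hn; first by left.
  case: (leqP k 1) => hk; first by right.
  exfalso; exact: (impossible Ha Hb hk hn Htb Hs Heq Hef).
move=> H.
have k0 := k_gt0 Hb.
case: (leqP k 1) => hk.
  have k1 : k = 1%N by lia.
  subst k; exact: case_k1.
have hkn : (k <= n)%N by case: Ha.
case: H => [hn|]; last by rewrite leqNgt hk.
have n2 : n = 2%N by lia.
have k2 : k = 2%N by lia.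
subst n k; exact: case_22.
Qed.
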